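(* Let $\mathcal{A}=\mathcal{R}*_K\mathcal{S}*_L\mathcal{T}\in\mathbb{C}^{I_1\times\cdots\times I_N\times J_1\times\cdots\times J_M}$, where $\mathcal{R}\in\mathbb{C}^{I_1\times\cdots\times I_N\times H_1\times\cdots\times H_K}$, $\mathcal{S}\in\mathbb{C}^{H_1\times\cdots\times H_K\times G_1\times\cdots\times G_L}$ and $\mathcal{T}\in\mathbb{C}^{G_1\times\cdots\times G_L\times J_1\times\cdots\times J_M}$, and write $\mathcal{Z}=\mathcal{T}^{\dagger}*_L\mathcal{S}^{\dagger}*_K\mathcal{R}^{\dagger}$. Then $\mathcal{A}^{\dagger}=\mathcal{Z}$ if and only if all of the following hold: (i) $\mathcal{R}^{\dagger}*_N\mathcal{A}*_M\mathcal{Z}*_N\mathcal{A}*_M\mathcal{T}^{\dagger}=\mathcal{R}^{\dagger}*_N\mathcal{A}*_M\mathcal{T}^{\dagger}$; (ii) $\mathcal{T}*_M\mathcal{Z}*_N\mathcal{A}*_M\mathcal{Z}*_N\mathcal{R}=\mathcal{T}*_M\mathcal{Z}*_N\mathcal{R}$; (iii) $[\mathcal{R}^H*_N\mathcal{A}*_M\mathcal{Z}*_N\mathcal{R}]^H=\mathcal{R}^H*_N\mathcal{A}*_M\mathcal{Z}*_N\mathcal{R}$; (iv) $[\mathcal{T}*_M\mathcal{Z}*_N\mathcal{A}*_M\mathcal{T}^H]^H=\mathcal{T}*_M\mathcal{Z}*_N\mathcal{A}*_M\mathcal{T}^H$.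
   Context: $\mathbb{C}^{I_1\times\cdots\times I_N}$ denotes the set of complex tensors of order $N$ and dimension $I_1\times\cdots\times I_N$. For $\mathcal{A}\in\mathbb{C}^{I_1\times\cdots\times I_N\times K_1\times\cdots\times K_N}$ and $\mathcal{B}\in\mathbb{C}^{K_1\times\cdots\times K_N\times J_1\times\cdots\times J_M}$, the Einstein product $\mathcal{A}*_N\mathcal{B}$ is defined by $(\mathcal{A}*_N\mathcal{B})_{i_1\dots i_N j_1\dots j_M}=\sum_{k_1,\dots,k_N}a_{i_1\dots i_N k_1\dots k_N}b_{k_1\dots k_N j_1\dots j_M}$; it is associative. For $\mathcal{A}\in\mathbb{C}^{I_1\times\cdots\times I_N\times J_1\times\cdots\times J_M}$, $\mathcal{A}^H\in\mathbb{C}^{J_1\times\cdots\times J_M\times I_1\times\cdots\times I_N}$ has entries $(\mathcal{A}^H)_{j_1\dots j_M i_1\dots i_N}=\overline{a_{i_1\dots i_N j_1\dots j_M}}$, and the Moore–Penrose inverse $\mathcal{A}^{\dagger}$ is the unique $\mathcal{X}\in\mathbb{C}^{J_1\times\cdots\times J_M\times I_1\times\cdots\times I_N}$ with $\mathcal{A}*_M\mathcal{X}*_N\mathcal{A}=\mathcal{A}$, $\mathcal{X}*_N\mathcal{A}*_M\mathcal{X}=\mathcal{X}$, $(\mathcal{A}*_M\mathcal{X})^H=\mathcal{A}*_M\mathcal{X}$, $(\mathcal{X}*_N\mathcal{A})^H=\mathcal{X}*_N\mathcal{A}$. *)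

(* Defs.v *)
From HB Require Import structures.
From mathcomp Require Import all_boot all_order all_algebra.
From mathcomp Require Import complex.
From mathcomp Require Import reals.
From Stdlib Require Import ClassicalEpsilon.
Set Implicit Arguments. Unset Strict Implicit. Unset Printing Implicit Defensive.
Import Order.TTheory GRing.Theory Num.Theory.
Local Open Scope ring_scope.

(* Multi-indices (i_1,...,i_n) with i_k < d k : the index set of
   I_1 x ... x I_n when d k = I_(k+1). *)
Definition idx (n : nat) (d : 'I_n -> nat) : finType :=
  {dffun forall k : 'I_n, 'I_(d k)}.

(* A tensor in C^{I_1 x..x I_N x J_1 x..x J_M}, indexed by pairs
   (i, j) of a multi-index i of the first N modes and j of the last M. *)
Definition tensor (C : Type) (I J : finType) := {ffun I * J -> C}.

Section Tensors.
Variable R : realType.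
Notation C := (R[i]).

Definition einstein (I K J : finType) (A : tensor C I K) (B : tensor C K J)
  : tensor C I J := [ffun p => \sum_(k : K) A (p.1, k) * B (k, p.2)].

Definition ctr (I J : finType) (A : tensor C I J) : tensor C J I :=
  [ffun p => (A (p.2, p.1))^*].

Definition is_MP (I J : finType) (A : tensor C I J) (X : tensor C J I) : Prop :=
  [/\ einstein (einstein A X) A = A,
      einstein (einstein X A) X = X,
      ctr (einstein A X) = einstein A X
    & ctr (einstein X A) = einstein X A].

(* The Moore-Penrose inverse: the (unique, existing) X satisfying the
   Penrose equations, selected by Hilbert's epsilon. *)
Definition mpinv (I J : finType) (A : tensor C I J) : tensor C J I :=
  epsilon (inhabits [ffun=> 0]) (is_MP A).
End Tensors.

Arguments einstein {R I K J}.
Arguments ctr {R I J}.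
Arguments mpinv {R I J}.

(* Main.v *)
Require Import Defs.
From mathcomp Require Import all_boot all_order all_algebra.
From mathcomp Require Import complex reals.
From Stdlib Require Import ClassicalEpsilon.
Set Implicit Arguments. Unset Strict Implicit. Unset Printing Implicit Defensive.
Import Order.TTheory GRing.Theory Num.Theory.
Local Open Scope ring_scope.

Section Work.
Variable R : realType.
Notation C := (R[i]).
Notation ein := (@einstein R _ _ _).

Lemma einA (I K L J : finType) (A : tensor C I K) (B : tensor C K L)
  (D : tensor C L J) : ein A (ein B D) = ein (ein A B) D.
Proof.
apply/ffunP=> p; rewrite !ffunE /=.
under eq_bigr do rewrite ffunE /= big_distrr /=.
rewrite exchange_big /=; apply: eq_bigr => l _.
rewrite ffunE /= big_distrl /=; apply: eq_bigr => k _; by rewrite mulrA.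
Qed.

Lemma ctrK (I J : finType) (A : tensor C I J) : ctr (ctr A) = A.
Proof. by apply/ffunP=> -[i j]; rewrite !ffunE conjCK. Qed.

Lemma ctr_ein (I K J : finType) (A : tensor C I K) (B : tensor C K J) :
  ctr (ein A B) = ein (ctr B) (ctr A).
Proof.
apply/ffunP=> -[j i]; rewrite !ffunE /= rmorph_sum; apply: eq_bigr => k _.
by rewrite !ffunE /= rmorphM mulrC.
Qed.

Lemma einBl (I K J : finType) (A B : tensor C I K) (D : tensor C K J) :
  ein (A - B) D = ein A D - ein B D.
Proof.
apply/ffunP=> p; rewrite !ffunE -sumrB; apply: eq_bigr => k _.
by rewrite !ffunE mulrBl.
Qed.

Lemma einBr (I K J : finType) (A : tensor C I K) (B D : tensor C K J) :
  ein A (B - D) = ein A B - ein A D.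
Proof.
apply/ffunP=> p; rewrite !ffunE -sumrB; apply: eq_bigr => k _.
by rewrite !ffunE mulrBr.
Qed.

Lemma ctrB (I J : finType) (A B : tensor C I J) : ctr (A - B) = ctr A - ctr B.
Proof. by apply/ffunP=> -[i j]; rewrite !ffunE rmorphB. Qed.

Lemma ein_ctr_eq0 (I J : finType) (X : tensor C I J) :
  ein X (ctr X) = 0 -> X = 0.
Proof.
move=> H; apply/ffunP=> -[i j]; rewrite ffunE.
have := congr1 (fun F : tensor C I I => F (i, i)) H; rewrite /= !ffunE /=.
move/eqP; rewrite psumr_eq0; last first.
  by move=> k _; rewrite ffunE /= mul_conjC_ge0.
move/allP/(_ j (mem_index_enum _)); rewrite ffunE /= mul_conjC_eq0.
by move/eqP.
Qed.

Lemma cancel_r (I J : finType) (A : tensor C I J) (P : tensor C J J) :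
  ein (ein P (ctr A)) A = ein (ctr A) A -> ein P (ctr A) = ctr A.
Proof.
move=> H; apply/eqP; rewrite -subr_eq0; apply/eqP; apply: ein_ctr_eq0.
rewrite ctrB ctr_ein ctrK einBl !einBr !einA H.
by rewrite subrr.
Qed.

Definition mx_of (I J : finType) (A : tensor C I J) : 'M[C]_(#|I|, #|J|) :=
  \matrix_(i, j) A (enum_val i, enum_val j).
Definition ten_of (I J : finType) (M : 'M[C]_(#|I|, #|J|)) : tensor C I J :=
  [ffun p => M (enum_rank p.1) (enum_rank p.2)].

Lemma mx_ofK (I J : finType) (A : tensor C I J) : ten_of (mx_of A) = A.
Proof. by apply/ffunP=> -[i j]; rewrite !ffunE mxE /= !enum_rankK. Qed.

Lemma ten_ofK (I J : finType) (M : 'M[C]_(#|I|, #|J|)) : mx_of (ten_of M) = M.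
Proof. by apply/matrixP=> i j; rewrite mxE ffunE /= !enum_valK. Qed.

Lemma mx_of_ein (I K J : finType) (A : tensor C I K) (B : tensor C K J) :
  mx_of (ein A B) = mx_of A *m mx_of B.
Proof.
apply/matrixP=> i j; rewrite !mxE ffunE /=.
under [RHS]eq_bigr do rewrite !mxE.
rewrite -(big_enum_val (A := K) (fun k => A (enum_val i, k) * B (k, enum_val j))).
by apply: eq_bigl => k.
Qed.

Lemma ginv_ex (I J : finType) (B : tensor C I J) :
  exists G : tensor C J I, ein (ein B G) B = B.
Proof.
exists (ten_of (pinvmx (mx_of B))).
rewrite -[RHS]mx_ofK -[LHS]mx_ofK; congr ten_of.
by rewrite !mx_of_ein ten_ofK mulmxKpV.
Qed.

Lemma inv13_ex (I J : finType) (A : tensor C I J) :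
  exists Y : tensor C J I, ein (ein A Y) A = A /\ ctr (ein A Y) = ein A Y.
Proof.
have [G HG] := ginv_ex (ein (ctr A) A).
have HC : ctr (ein (ctr A) A) = ein (ctr A) A by rewrite ctr_ein ctrK.
have HG' : ein (ein (ein (ctr A) A) (ctr G)) (ein (ctr A) A) = ein (ctr A) A.
  by have := congr1 ctr HG; rewrite !ctr_ein !ctrK !einA.
have hb : forall G0, ein (ein (ein (ctr A) A) G0) (ein (ctr A) A) = ein (ctr A) A ->
    ein (ein (ein (ctr A) A) G0) (ctr A) = ctr A.
  by move=> G0 H; apply: cancel_r; rewrite -einA.
have b1 := hb _ HG'.
have a1 : ein (ein (ein A G) (ctr A)) A = A.
  by rewrite -[RHS]ctrK -{2}b1 !ctr_ein !ctrK !einA.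
exists (ein G (ctr A)); rewrite einA a1; split => //.
have cP : ctr (ein (ein A G) (ctr A)) = ein A (ein (ctr G) (ctr A)).
  by rewrite !ctr_ein ctrK einA.
have E1 : ein (ein (ein A G) (ctr A)) (ein A (ein (ctr G) (ctr A)))
          = ein (ein A G) (ctr A).
  by rewrite -!einA [X in ein G X]einA [X in ein G X]einA b1.
have E2 : ein (ein (ein A G) (ctr A)) (ein A (ein (ctr G) (ctr A)))
          = ein A (ein (ctr G) (ctr A)).
  by rewrite !einA a1.
by rewrite cP -E2 E1.
Qed.

Lemma mp_ex (I J : finType) (A : tensor C I J) : exists X, is_MP A X.
Proof.
have [Y [Y1 Y3]] := inv13_ex A.
have [W [W1 W3]] := inv13_ex (ctr A).
have W1' : ein (ein A (ctr W)) A = A by have := congr1 ctr W1; rewrite !ctr_ein !ctrK einA.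
have W4 : ctr (ein (ctr W) A) = ein (ctr W) A.
  by rewrite ctr_ein ctrK -[LHS]W3 ctr_ein ctrK.
set Wh := ctr W.
have XA : ein (ein (ein Wh A) Y) A = ein Wh A.
  by rewrite -!einA [ein A (ein Y A)]einA Y1.
have AX : ein A (ein (ein Wh A) Y) = ein A Y.
  by rewrite einA [ein A (ein Wh A)]einA W1'.
exists (ein (ein Wh A) Y); split.
- by rewrite AX Y1.
- rewrite XA einA [ein (ein Wh A) (ein Wh A)]einA -[ein (ein Wh A) Wh]einA.
  by rewrite -[ein (ein Wh (ein A Wh)) A]einA W1'.
- by rewrite AX.
- by rewrite XA W4.
Qed.

Lemma mpinvP (I J : finType) (A : tensor C I J) : is_MP A (mpinv A).
Proof. rewrite /mpinv; apply: epsilon_spec; exact: mp_ex. Qed.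

Lemma mp_uniq (I J : finType) (A : tensor C I J) X Y :
  is_MP A X -> is_MP A Y -> X = Y.
Proof.
move=> [X1 X2 X3 X4] [Y1 Y2 Y3 Y4].
have h1 : ein (ctr A) (ein (ctr Y) (ctr A)) = ctr A.
  by have := congr1 ctr Y1; rewrite !ctr_ein.
have h2 : ein (ctr A) (ein (ctr X) (ctr A)) = ctr A.
  by have := congr1 ctr X1; rewrite !ctr_ein.
have eX : X = ein (ein X A) Y.
  transitivity (ein X (ctr (ein A X))); first by rewrite X3 einA X2.
  rewrite ctr_ein.
  transitivity (ein X (ein (ctr X) (ein (ctr A) (ein (ctr Y) (ctr A))))).
    by rewrite h1.
  transitivity (ein X (ein (ctr (ein A X)) (ctr (ein A Y)))).
    by rewrite !ctr_ein -!einA.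
  by rewrite X3 Y3 !einA X2.
have eY : Y = ein (ein X A) Y.
  transitivity (ein (ctr (ein Y A)) Y); first by rewrite Y4 Y2.
  rewrite ctr_ein.
  transitivity (ein (ein (ein (ctr A) (ein (ctr X) (ctr A))) (ctr Y)) Y).
    by rewrite h2.
  transitivity (ein (ein (ctr (ein X A)) (ctr (ein Y A))) Y).
    by rewrite !ctr_ein -!einA.
  by rewrite X4 Y4 -!einA [ein Y (ein A Y)]einA Y2.
by rewrite eX -eY.
Qed.

Lemma mpinv_eq (I J : finType) (A : tensor C I J) X :
  mpinv A = X <-> is_MP A X.
Proof.
split=> [<-|H]; first exact: mpinvP.
exact: mp_uniq (mpinvP A) H.
Qed.

End Work.

Theorem theorem4p1 (R : realType)
  (N M K L : nat)
  (dI : 'I_N -> nat) (dJ : 'I_M -> nat) (dH : 'I_K -> nat) (dG : 'I_L -> nat)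
  (RR : tensor R[i] (idx dI) (idx dH))
  (S : tensor R[i] (idx dH) (idx dG))
  (T : tensor R[i] (idx dG) (idx dJ)) :
  let A := einstein (einstein RR S) T in
  let Z := einstein (einstein (mpinv T) (mpinv S)) (mpinv RR) in
  mpinv A = Z <->
  [/\ einstein (einstein (einstein (einstein (mpinv RR) A) Z) A) (mpinv T)
        = einstein (einstein (mpinv RR) A) (mpinv T),
      einstein (einstein (einstein (einstein T Z) A) Z) RR
        = einstein (einstein T Z) RR,
      ctr (einstein (einstein (einstein (ctr RR) A) Z) RR)
        = einstein (einstein (einstein (ctr RR) A) Z) RR
    & ctr (einstein (einstein (einstein T Z) A) (ctr T))
        = einstein (einstein (einstein T Z) A) (ctr T)].
Proof.
move=> A Z.
have [R1 R2 R3 R4] := mpinvP RR.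
have [S1 S2 S3 S4] := mpinvP S.
have [T1 T2 T3 T4] := mpinvP T.
move: R1 R2 R3 R4 T1 T2 T3 T4.
rewrite -/Z.
set Rp := mpinv RR; set Sp := mpinv S; set Tp := mpinv T.
move=> R1 R2 R3 R4 T1 T2 T3 T4.
have RA : einstein (einstein RR Rp) A = A.
  by rewrite /A -!einA einA einA R1.
have AT : einstein A (einstein Tp T) = A.
  by rewrite /A !einA -[einstein (einstein (einstein RR S) T) Tp]einA -einA T1.
have ZR : einstein Z (einstein RR Rp) = Z.
  rewrite /Z einA -[einstein (einstein (einstein Tp Sp) Rp) RR]einA -einA.
  by rewrite R2.
have TZ : einstein (einstein Tp T) Z = Z by rewrite /Z !einA T2.
clearbody A Z.
have RAg : forall (J' : finType) (W : tensor R[i] _ J'),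
    einstein (einstein RR Rp) (einstein A W) = einstein A W.
  by move=> J' W; rewrite einA RA.
have TZg : forall (J' : finType) (W : tensor R[i] _ J'),
    einstein (einstein Tp T) (einstein Z W) = einstein Z W.
  by move=> J' W; rewrite einA TZ.
rewrite mpinv_eq; split.
  case=> Z1 Z2 Z3 Z4; split.
  - by rewrite -!einA [einstein A (einstein Z _)]einA
       [einstein (einstein A Z) _]einA Z1.
  - by rewrite -!einA [einstein Z (einstein A _)]einA
       [einstein (einstein Z A) _]einA Z2.
  - rewrite -[einstein (einstein (ctr RR) A) Z]einA ctr_ein ctr_ein Z3 ctrK.
    by rewrite !einA.
  - rewrite -[einstein (einstein T Z) A]einA ctr_ein ctr_ein Z4 ctrK.
    by rewrite !einA.
case=> Hi Hii Hiii Hiv; split.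
- transitivity (einstein (einstein RR
     (einstein (einstein (einstein (einstein Rp A) Z) A) Tp)) T).
    by rewrite -!einA AT [einstein RR _]einA RAg.
  by rewrite Hi -!einA AT einA RA.
- transitivity (einstein (einstein Tp
     (einstein (einstein (einstein (einstein T Z) A) Z) RR)) Rp).
    by rewrite -!einA ZR [einstein Tp _]einA TZg.
  by rewrite Hii -!einA ZR einA TZ.
- have e : einstein A Z = einstein (einstein (ctr Rp)
     (einstein (einstein (einstein (ctr RR) A) Z) RR)) Rp.
    by rewrite -!einA ZR [einstein (ctr Rp) _]einA -ctr_ein R3 RAg.
  by rewrite e ctr_ein ctr_ein ctrK Hiii einA.
- have e : einstein Z A = einstein (einstein Tp
     (einstein (einstein (einstein T Z) A) (ctr T))) (ctr Tp).
    by rewrite -!einA -ctr_ein T4 AT [einstein Tp _]einA TZg.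
  by rewrite e ctr_ein ctr_ein ctrK Hiv einA.
Qed.
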